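(* Let $S$ be a uniquely $2$-divisible inverse semigroup and let $\alpha$ be an automorphism of $S$ satisfying $\alpha^2 = 1$ and $\mathrm{Fix}(\alpha) = E(S)$. Then $x\alpha = x^{-1}$ for all $x\in S$, and consequently $S$ is commutative.
   Context: A semigroup $S$ is uniquely $2$-divisible if the squaring map $S\to S$, $x\mapsto x^2$, is a bijection. $E(S)$ denotes the set of idempotents of $S$; for an automorphism $\alpha$ of $S$ (written on the right, $x\mapsto x\alpha$), $\mathrm{Fix}(\alpha) = \{x\in S \mid x\alpha = x\}$. In an inverse semigroup, $x^{-1}$ denotes the unique inverse of $x$ (the unique element with $xx^{-1}x=x$ and $x^{-1}xx^{-1}=x^{-1}$). *)

(* Defs.v *)
From Stdlib Require Import Classical.

Definition associative {S : Type} (mul : S -> S -> S) : Prop :=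
  forall x y z, mul x (mul y z) = mul (mul x y) z.

Definition is_inverse {S : Type} (mul : S -> S -> S) (x y : S) : Prop :=
  mul (mul x y) x = x /\ mul (mul y x) y = y.

Definition inverse_semigroup {S : Type} (mul : S -> S -> S) : Prop :=
  associative mul /\ forall x, exists y, is_inverse mul x y /\
    forall z, is_inverse mul x z -> z = y.

Definition bijective_map {A B : Type} (f : A -> B) : Prop :=
  (forall x y, f x = f y -> x = y) /\ (forall b, exists a, f a = b).

Definition uniquely_2_divisible {S : Type} (mul : S -> S -> S) : Prop :=
  bijective_map (fun x => mul x x).

Definition idempotent {S : Type} (mul : S -> S -> S) (e : S) : Prop :=
  mul e e = e.

Definition automorphism {S : Type} (mul : S -> S -> S) (a : S -> S) : Prop :=
  bijective_map a /\ forall x y, a (mul x y) = mul (a x) (a y).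

(* Main.v *)
Require Import Defs.
From Stdlib Require Import Classical ClassicalEpsilon.

Section H.
Context {S : Type} (mul : S -> S -> S) (inv : S -> S)
  (A : associative mul)
  (Iv : forall x, is_inverse mul x (inv x))
  (Uq : forall x z, is_inverse mul x z -> z = inv x).

Ltac nrm := repeat rewrite <- A.
Ltac mk h := let X := fresh "X" in let HH := fresh "HH" in
  intro X; pose proof (f_equal (fun t => mul t X) h) as HH; simpl in HH;
  repeat rewrite <- A in HH; exact HH.

Lemma inv_inv x : inv (inv x) = x.
Proof. symmetry; apply Uq. destruct (Iv x) as [h1 h2]. split; assumption. Qed.

Lemma idem_inv e : mul e e = e -> inv e = e.
Proof. intro He. symmetry; apply Uq. split; rewrite !He; reflexivity. Qed.

Lemma idem_prod e f : mul e e = e -> mul f f = f -> mul e (mul f (mul e f)) = mul e f.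
Proof.
  intros He Hf.
  set (a := inv (mul e f)).
  destruct (Iv (mul e f)) as [h1 h2]. fold a in h1, h2.
  assert (He' : forall X, mul e (mul e X) = mul e X) by mk He.
  assert (Hf' : forall X, mul f (mul f X) = mul f X) by mk Hf.
  rewrite <- !A in h1, h2.
  assert (h1' : forall X, mul e (mul f (mul a (mul e (mul f X)))) = mul e (mul f X)) by mk h1.
  assert (h2' : forall X, mul a (mul e (mul f (mul a X))) = mul a X) by mk h2.
  assert (Ha : mul f (mul a e) = a).
  { apply (Uq (mul e f) (mul f (mul a e))). split; nrm.
    - rewrite Hf', He'. exact h1.
    - rewrite He', Hf', h2'. reflexivity.
  }
  assert (Haa : mul a a = a).
  { rewrite <- Ha at 1 2. nrm. rewrite h2'. exact Ha. }
  assert (Hef : mul e f = a).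
  { rewrite <- (inv_inv (mul e f)). apply idem_inv. exact Haa. }
  rewrite Hef at 1 2. rewrite A, Hef. exact Haa.
Qed.

Lemma idem_comm e f : mul e e = e -> mul f f = f -> mul e f = mul f e.
Proof.
  intros He Hf.
  assert (He' : forall X, mul e (mul e X) = mul e X) by mk He.
  assert (Hf' : forall X, mul f (mul f X) = mul f X) by mk Hf.
  assert (Hid := idem_prod e f He Hf).
  assert (Hid2 := idem_prod f e Hf He).
  assert (Hid' : forall X, mul e (mul f (mul e (mul f X))) = mul e (mul f X)) by mk Hid.
  assert (Hfe : mul f e = inv (mul e f)).
  { apply Uq. split; nrm.
    - rewrite Hf', He'. exact Hid.
    - rewrite He', Hf'. exact Hid2. }
  rewrite Hfe. symmetry. apply idem_inv. rewrite <- A. exact Hid.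
Qed.

Lemma idr x : mul (mul x (inv x)) (mul x (inv x)) = mul x (inv x).
Proof. destruct (Iv x) as [x1 x2]. rewrite A, x1; reflexivity. Qed.
Lemma idl x : mul (mul (inv x) x) (mul (inv x) x) = mul (inv x) x.
Proof. destruct (Iv x) as [x1 x2]. rewrite A, x2; reflexivity. Qed.

Lemma k1' x : mul x (mul (inv x) x) = x.
Proof. destruct (Iv x) as [x1 x2]. rewrite A; exact x1. Qed.
Lemma k2' x : mul (inv x) (mul x (inv x)) = inv x.
Proof. destruct (Iv x) as [x1 x2]. rewrite A; exact x2. Qed.

Lemma k1 x Z : mul x (mul (inv x) (mul x Z)) = mul x Z.
Proof. rewrite (A (inv x)), A, k1'. reflexivity. Qed.
Lemma k2 x Z : mul (inv x) (mul x (mul (inv x) Z)) = mul (inv x) Z.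
Proof. rewrite (A x), A, k2'. reflexivity. Qed.

Lemma inv_mul x y : inv (mul x y) = mul (inv y) (inv x).
Proof.
  symmetry. apply Uq.
  assert (C := idem_comm _ _ (idr y) (idl x)).
  split.
  - transitivity (mul x (mul (mul (mul y (inv y)) (mul (inv x) x)) y)).
    + nrm. reflexivity.
    + rewrite C. nrm. rewrite k1, k1'. reflexivity.
  - transitivity (mul (inv y) (mul (mul (mul (inv x) x) (mul y (inv y))) (inv x))).
    + nrm. reflexivity.
    + rewrite <- C. nrm. rewrite k2, k2'. reflexivity.
Qed.
End H.

Theorem theorem1p4 (S : Type) (mul : S -> S -> S) (alpha : S -> S)
  (HS : inverse_semigroup mul)
  (H2 : uniquely_2_divisible mul)
  (Ha : automorphism mul alpha)
  (Hinv : forall x, alpha (alpha x) = x)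
  (Hfix : forall x, alpha x = x <-> idempotent mul x) :
  (forall x, is_inverse mul x (alpha x)) /\
  (forall x y, mul x y = mul y x).
Proof.
  destruct HS as [A U].
  pose (inv := fun x => proj1_sig (constructive_indefinite_description _ (U x))).
  assert (Iv : forall x, is_inverse mul x (inv x)).
  { intro x. exact (proj1 (proj2_sig (constructive_indefinite_description _ (U x)))). }
  assert (Uq : forall x z, is_inverse mul x z -> z = inv x).
  { intros x z Hz. exact (proj2 (proj2_sig (constructive_indefinite_description _ (U x))) z Hz). }
  clearbody inv.
  destruct H2 as [sinj ssurj]. destruct Ha as [[ainj asurj] amul].
  assert (II := inv_inv mul inv Iv Uq).
  assert (IM := inv_mul mul inv A Iv Uq).
  assert (ainv : forall x, alpha (inv x) = inv (alpha x)).
  { intro x. apply Uq. destruct (Iv x) as [p q]. split; rewrite <- !amul; congruence. }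
  assert (fixI : forall e, mul e e = e -> alpha e = e) by (intros e He; apply Hfix; exact He).
  assert (key : forall x, alpha x = inv x).
  { intro x.
    assert (E0 : mul x (inv x) = mul (alpha x) (inv (alpha x))).
    { rewrite <- ainv, <- amul. symmetry. apply fixI. apply (idr mul inv A Iv). }
    set (a := mul (inv x) (alpha x)).
    assert (Aa : alpha a = inv a).
    { unfold a. rewrite amul, IM, II, ainv, Hinv. reflexivity. }
    destruct (ssurj a) as [s Hs]. simpl in Hs.
    assert (Hsa : alpha s = inv s).
    { apply sinj. simpl. rewrite <- amul, Hs, Aa, <- Hs, IM. reflexivity. }
    assert (g : mul s (inv s) = mul (inv s) s).
    { rewrite <- (fixI _ (idr mul inv A Iv s)) at 1. rewrite amul, ainv, Hsa, II. reflexivity. }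
    assert (xa : mul x a = alpha x).
    { unfold a. rewrite A, E0. apply (Iv (alpha x)). }
    assert (sss : mul s (mul s (inv s)) = s).
    { rewrite g. apply (k1' mul inv A Iv). }
    set (h := mul x s).
    assert (hh : mul h h = h).
    { apply Hfix. unfold h. rewrite amul, Hsa, <- xa, <- Hs.
      rewrite <- !A. rewrite sss. reflexivity. }
    assert (aa : mul (inv x) x = mul s (inv s)).
    { transitivity (mul a (inv a)).
      - unfold a. rewrite IM, II. rewrite <- A, (A (alpha x)), <- E0.
        rewrite (proj1 (Iv x)). reflexivity.
      - rewrite <- Hs, IM, <- A, (A s (inv s) (inv s)), A, sss. reflexivity. }
    assert (hv : h = mul (inv s) s).
    { rewrite <- hh at 1. rewrite <- (idem_inv mul inv Uq h hh) at 1.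
      unfold h. rewrite IM, <- A, (A (inv x) x s), aa, (proj1 (Iv s)). reflexivity. }
    assert (xs : x = inv s).
    { rewrite <- (k1' mul inv A Iv x). rewrite aa, A. fold h. rewrite hv, <- A.
      apply (k2' mul inv A Iv). }
    rewrite xs, ainv, Hsa, II. reflexivity. }
  split.
  - intro x. rewrite key. apply Iv.
  - assert (C : forall x y, mul (inv x) (inv y) = mul (inv y) (inv x)).
    { intros x y. transitivity (alpha (mul x y)); [rewrite amul, !key; reflexivity | rewrite key, IM; reflexivity]. }
    intros x y. rewrite <- (II x), <- (II y). apply C.
Qed.
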